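(* Let $\mathcal{B}=\{(1,1,2),(1,2,2),(2,1,1)\}$, let $X^{\mathcal{B}}$ be the corresponding $S_2$-SFT and $F$ its SNRE, which is $a_n=a_{n-1}b_{n-1}+b_{n-1}^2$, $b_n=a_{n-1}^2$, $a_1=2$, $b_1=1$. Then $F$ is of the oscillating type, and $$h(X^{\mathcal{B}})=\frac14\lim_{n\to\infty}\Big(\alpha_1+\sum_{j=1}^{n}2^{-2j}\ln r^{(a)}_{2j-1}\Big),$$ where $\alpha_1=\ln a_1$ and $r^{(a)}_m=1+\frac{b_m}{a_m}+\big(\frac{b_m}{a_m}\big)^2$.
   Context: $S_2$ is the free semigroup on two generators, identified with finite words over $\{1,2\}$ (root $\epsilon$); alphabet $\{1,2\}$. For a basic set $\mathcal{B}\subseteq\{1,2\}^3$ of admissible 2-blocks $(i,i_1,i_2)$, $a_n$ (resp. $b_n$) is the number of maps $u$ from words of length $\le n$ to $\{1,2\}$ with $(u(w),u(w1),u(w2))\in\mathcal{B}$ for all words $w$ of length $\le n-1$ and $u(\epsilon)=1$ (resp. $2$); $|B_n(X^{\mathcal{B}})|=a_n+b_n$. The entropy is $h(X^{\mathcal{B}})=\limsup_{n}\frac{\ln(a_n+b_n)}{2^{n+1}-1}$, where $2^{n+1}-1$ is the number of words of length $\le n$; this limsup is known to be a limit. The SNRE is of oscillating type if there are two infinite subsequences $(n^{(a)}_m)$ and $(n^{(b)}_m)$ of $\mathbb{N}$ such that $a_n\ge b_n$ for $n$ in the first and $a_n<b_n$ for $n$ in the second. *)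

(* Defs.v *)
From Stdlib Require Import Reals.
From Coquelicot Require Import Coquelicot.
From mathcomp Require Import all_boot.
Local Open Scope nat_scope.

Set Implicit Arguments.
Unset Strict Implicit.
Unset Printing Implicit Defensive.

(* Symbols: the alphabet {1,2} is encoded by bool: false <-> 1, true <-> 2. *)
Definition sym (b : bool) : nat := if b then 2 else 1.

Definition inB (i i1 i2 : nat) : bool :=
  [|| (i, i1, i2) == (1, 1, 2), (i, i1, i2) == (1, 2, 2) | (i, i1, i2) == (2, 1, 1)].

(* Words of S_2 of length <= n are encoded in heap order: the root epsilon is
   0, and the word w c (c in {1,2}) is 2*idx(w) + c.  This is a bijection
   between words of length <= n and {0, ..., 2^(n+1) - 2}; the words of length
   <= n-1 are exactly the indices < 2^n - 1. *)
Definition nwords (n : nat) : nat := (2 ^ n.+1 - 1)%N.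

Definition lab (N : nat) (u : {ffun 'I_N -> bool}) (k : nat) : bool :=
  match @insub nat (fun k => k < N) _ k with
  | Some i => u i
  | None => false
  end.

Definition admissible (n : nat) (r : bool) (u : {ffun 'I_(nwords n) -> bool}) : bool :=
  (sym (lab u 0) == sym r) &&
  [forall k : 'I_(nwords n),
     (k < 2 ^ n - 1) ==>
       inB (sym (lab u k)) (sym (lab u (2 * k + 1))) (sym (lab u (2 * k + 2)))].

Arguments admissible : clear implicits.

Definition acount (n : nat) : nat := #|[pred u : {ffun 'I_(nwords n) -> bool} | admissible n false u]|.
Definition bcount (n : nat) : nat := #|[pred u : {ffun 'I_(nwords n) -> bool} | admissible n true u]|.

Definition oscillating (a b : nat -> nat) : Prop :=
  (forall N, exists n, (N <= n)%N /\ (b n <= a n)%N) /\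
  (forall N, exists n, (N <= n)%N /\ (a n < b n)%N).

Local Open Scope R_scope.

Definition entropy : Rbar :=
  LimSup_seq (fun n => ln (INR (acount n + bcount n)) / INR (nwords n)).

Definition ra (m : nat) : R :=
  let q := INR (bcount m) / INR (acount m) in 1 + q + q ^ 2.

Fixpoint Ssum (n : nat) : R :=
  match n with
  | O => 0
  | S j => Ssum j + / 2 ^ (2 * S j)%N * ln (ra (2 * S j - 1)%N)
  end.

Definition Spart (n : nat) : R := ln (INR (acount 1)) + Ssum n.

(* Main.v *)
Require Import Defs.
From Stdlib Require Import Reals Lra.
From Coquelicot Require Import Coquelicot.
From mathcomp Require Import all_boot zify.
Set Warnings "-notation-overridden,-ambiguous-paths".
Local Open Scope nat_scope.
Set Implicit Arguments.
Set Implicit Arguments.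

Definition dep k := trunc_log 2 k.+1.
Definition sub (b : bool) k := k + sym b * 2 ^ dep k.

Lemma dep_bounds k : 2 ^ dep k <= k.+1 < 2 ^ (dep k).+1.
Proof. by rewrite trunc_logP // trunc_log_ltn. Qed.

Lemma dep_eq k d : 2 ^ d <= k.+1 < 2 ^ d.+1 -> dep k = d.
Proof. exact: trunc_log_eq. Qed.

Lemma dep_lt k m : (k.+1 < 2 ^ m) = (dep k < m).
Proof.
have /andP [H1 H2] := dep_bounds k.
apply/idP/idP => H.
  rewrite ltnNge; apply/negP => Hm; move: H; rewrite ltnNge => /negP; apply.
  apply: leq_trans H1; by rewrite leq_exp2l.
apply: leq_trans H2 _; by rewrite leq_exp2l.
Qed.

Lemma sym12 b : sym b = 1 \/ sym b = 2. Proof. by case: b; [right|left]. Qed.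

Lemma dep_sub b k : dep (sub b k) = (dep k).+1.
Proof.
apply: dep_eq; have /andP [H1 H2] := dep_bounds k; rewrite /sub.
move: H2; rewrite !expnS; case: (sym12 b) => ->; lia.
Qed.

Lemma dep_2k k c : c = 1 \/ c = 2 -> dep (2 * k + c) = (dep k).+1.
Proof.
move=> Hc; apply: dep_eq; have /andP [H1 H2] := dep_bounds k.
move: H2; rewrite !expnS; lia.
Qed.

Lemma sub_2k b k c : c = 1 \/ c = 2 -> sub b (2 * k + c) = 2 * sub b k + c.
Proof. move=> Hc; rewrite /sub dep_2k // expnS; lia. Qed.

Lemma sub_lt b k m : (sub b k < 2 ^ m.+1 - 1) = (k < 2 ^ m - 1).
Proof.
have P1 : 0 < 2 ^ m by rewrite expn_gt0.
have P2 : 0 < 2 ^ m.+1 by rewrite expn_gt0.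
have -> : (sub b k < 2 ^ m.+1 - 1) = ((sub b k).+1 < 2 ^ m.+1) by apply/idP/idP; lia.
have -> : (k < 2 ^ m - 1) = (k.+1 < 2 ^ m) by apply/idP/idP; lia.
by rewrite !dep_lt dep_sub.
Qed.

Lemma sub_gt0 b k : 0 < sub b k.
Proof. rewrite /sub; have := expn_gt0 2 (dep k); case: (sym12 b) => ->; lia. Qed.

Lemma sub_inj b b' j j' : sub b j = sub b' j' -> b = b' /\ j = j'.
Proof.
move=> E; have ED : dep j = dep j' by apply/eq_add_S; rewrite -(dep_sub b) -(dep_sub b') E.
have /andP [H1 H2] := dep_bounds j; have /andP [H1' H2'] := dep_bounds j'.
move: E H2 H2' H1'; rewrite /sub -ED !expnS; have := expn_gt0 2 (dep j).
case: b; case: b' => /= P E1 H2 H2' H1'; try (split => //; lia); exfalso; lia.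


Qed.

Lemma sub_cover k : 0 < k -> exists b j, sub b j = k.
Proof.
move=> Hk; have /andP [H1 H2] := dep_bounds k.
case Ed : (dep k) H1 H2 => [|e] H1 H2; first by rewrite expn1 in H2; lia.
have P := expn_gt0 2 e.
move: H1 H2; rewrite !expnS => H1 H2.
case: (ltnP k.+1 (2 * 2 ^ e + 2 ^ e)) => H3.
  exists false, (k - 2 ^ e); rewrite /sub.
  have -> : dep (k - 2 ^ e) = e by apply: dep_eq; rewrite expnS; lia.
  simpl; lia.
exists true, (k - 2 * 2 ^ e); rewrite /sub.
have -> : dep (k - 2 * 2 ^ e) = e by apply: dep_eq; rewrite expnS; lia.
simpl; lia.
Qed.
Set Implicit Arguments.

Lemma labE N (u : {ffun 'I_N -> bool}) (i : 'I_N) : lab u i = u i.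
Proof. rewrite /lab; case: insubP => [j _ /val_inj -> //|]; by rewrite ltn_ord. Qed.

Lemma labN N (u : {ffun 'I_N -> bool}) k : N <= k -> lab u k = false.
Proof. rewrite /lab; case: insubP => [j Hj _|//]; rewrite leqNgt Hj. done. Qed.

Lemma sym_inj : injective sym. Proof. by case; case. Qed.

Definition Pb n r (f : nat -> bool) : Prop :=
  f 0 = r /\ forall k, k < 2 ^ n - 1 -> inB (sym (f k)) (sym (f (2 * k + 1))) (sym (f (2 * k + 2))).

Lemma admP n r u : reflect (Pb n r (lab u)) (admissible n r u).
Proof.
apply: (iffP andP) => [[/eqP/sym_inj H0 /forallP H]|[H0 H]]; split => //.
  move=> k Hk; have Hk' : k < nwords n by rewrite /nwords expnS; lia.
  by have := H (Ordinal Hk'); rewrite /= Hk.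
  by rewrite H0.
by apply/forallP => k; apply/implyP => Hk; apply: H.
Qed.

Lemma sub0 b : sub b 0 = sym b.
Proof. have E : dep 0 = 0 by apply: dep_eq. by rewrite /sub E expn0 muln1. Qed.

Lemma Pb_split n r f :
  Pb n.+1 r f <-> [/\ f 0 = r, inB (sym r) (sym (f 1)) (sym (f 2)),
     Pb n (f 1) (fun k => f (sub false k)) & Pb n (f 2) (fun k => f (sub true k))].
Proof.
split.
  move=> [H0 H]; have Hr : inB (sym r) (sym (f 1)) (sym (f 2)).
    by rewrite -H0; apply: (H 0); have := expn_gt0 2 n; rewrite expnS; lia.
  have Hc : forall b, Pb n (f (sym b)) (fun k => f (sub b k)).
    move=> b; split; first by rewrite sub0.
    move=> k Hk /=; rewrite !sub_2k; try by [left|right].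
    by apply: H; rewrite sub_lt.
  by split => //; [apply: (Hc false) | apply: (Hc true)].
move=> [H0 Hr [H10 H1] [H20 H2]]; split => // k Hk.
case: (posnP k) => [->|Hk0]; first by rewrite H0.
have [b [j Ej]] := (@sub_cover k Hk0); clear Hk0; rewrite -Ej in Hk *.
rewrite -!sub_2k; try by [left|right].
rewrite sub_lt in Hk; clear Ej; case: b Hk => Hk.
  by apply: H2.
by apply: H1.
Qed.

Lemma count0 r : #|[pred u : {ffun 'I_(nwords 0) -> bool} | admissible 0 r u]| = 1.
Proof.
rewrite -(card1 ([ffun => r] : {ffun 'I_(nwords 0) -> bool})); apply: eq_card => u /=.
rewrite /admissible inE.
have -> : [forall k : 'I_(nwords 0), (k < 2 ^ 0 - 1) ==> inB (sym (lab u k)) (sym (lab u (2 * k + 1))) (sym (lab u (2 * k + 2)))].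
  by apply/forallP => k.
rewrite andbT; apply/eqP/eqP => [/sym_inj H|->].
  apply/ffunP => i; rewrite ffunE; have -> : i = ord0 by apply: val_inj; case: i => [[]].
  by rewrite -H (labE u (ord0 : 'I_(nwords 0))).
by rewrite (labE _ (ord0 : 'I_(nwords 0))) ffunE.
Qed.

Set Implicit Arguments.

Definition child n b (u : {ffun 'I_(nwords n.+1) -> bool}) : {ffun 'I_(nwords n) -> bool} :=
  [ffun j : 'I_(nwords n) => lab u (sub b j)].

Arguments child {n} b u.
Lemma lab_child n b u j : lab (@child n b u) j = lab u (sub b j).
Proof.
case: (ltnP j (nwords n)) => Hj.
  by rewrite (labE _ (Ordinal Hj)) ffunE.
rewrite !labN //; move: Hj; rewrite /nwords => Hj.
by rewrite leqNgt sub_lt -leqNgt.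
Qed.

Lemma adm_split n r u :
  admissible n.+1 r u <-> [/\ lab u 0 = r,
     inB (sym r) (sym (lab (child false u) 0)) (sym (lab (child true u) 0)),
     admissible n (lab (child false u) 0) (child false u) &
     admissible n (lab (child true u) 0) (child true u)].
Proof.
rewrite !lab_child !sub0 /=.
have E : forall b, Pb n (lab u (sym b)) (lab (child b u)) <-> Pb n (lab u (sym b)) (fun k => lab u (sub b k)).
  move=> b; rewrite /Pb; split => -[H0 H]; split.
  - by rewrite -H0 lab_child sub0.
  - by move=> k Hk; move: (H k Hk); rewrite !lab_child.
  - by rewrite -H0 lab_child sub0.
  - by move=> k Hk; move: (H k Hk); rewrite !lab_child.
split.
  move/admP/Pb_split => [H0 Hr H1 H2]; split => //; apply/admP; [apply/(E false)|apply/(E true)]; done.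
move=> [H0 Hr /admP/(E false) H1 /admP/(E true) H2]; apply/admP/Pb_split; split => //.
Qed.

Unset Implicit Arguments.


Definition Adm n r := [set u : {ffun 'I_(nwords n) -> bool} | admissible n r u].
Definition Target n r := [set p : {ffun 'I_(nwords n) -> bool} * {ffun 'I_(nwords n) -> bool} |
  [&& inB (sym r) (sym (lab p.1 0)) (sym (lab p.2 0)), admissible n (lab p.1 0) p.1 & admissible n (lab p.2 0) p.2]].
Definition Phi n (u : {ffun 'I_(nwords n.+1) -> bool}) := (child false u, child true u).

Lemma adm_root {n r} v : admissible n r v -> lab v 0 = r.
Proof. by move/admP => []. Qed.

Lemma sub_ord n b (j : 'I_(nwords n)) : sub b j < nwords n.+1.
Proof. by rewrite /nwords sub_lt. Qed.

Definition Psi n r (p : {ffun 'I_(nwords n) -> bool} * {ffun 'I_(nwords n) -> bool}) :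
  {ffun 'I_(nwords n.+1) -> bool} :=
  [ffun i : 'I_(nwords n.+1) => if val i == 0 then r else
     if [pick j : 'I_(nwords n) | sub false j == i] is Some j then p.1 j else
     if [pick j : 'I_(nwords n) | sub true j == i] is Some j then p.2 j else false].
Arguments Psi {n}.

Lemma Psi_child n r p b : child b (@Psi n r p) = (if b then p.2 else p.1).
Proof.
apply/ffunP => j; rewrite ffunE (labE _ (Ordinal (sub_ord n b j))) ffunE /=.
have -> : (sub b j == 0) = false by apply/negbTE; rewrite -lt0n sub_gt0.
case: pickP => [j' /eqP E|H].
  have [Eb Ej] := sub_inj _ _ _ _ E; case: b Eb E => // _ _; congr (p.1 _); exact: val_inj.
case: b H => H; last by have := H j; rewrite eqxx.
case: pickP => [j' /eqP E|H']; last by have := H' j; rewrite eqxx.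
by have [_ Ej] := sub_inj _ _ _ _ E; congr (p.2 _); apply: val_inj.
Qed.

Lemma Psi_root n r p : lab (@Psi n r p) 0 = r.
Proof.
have H : 0 < nwords n.+1 by rewrite /nwords expnS; have := expn_gt0 2 n.+1; lia.
by rewrite (labE _ (Ordinal H)) ffunE.
Qed.

Lemma img n r : Phi n @: Adm n.+1 r = Target n r.
Proof.
apply/setP => p; apply/imsetP/idP.
  move=> [u]; rewrite inE => /adm_split [H0 Hr H1 H2] ->.
  by rewrite inE /= Hr H1 H2.
rewrite inE => /and3P [Hr H1 H2]; exists (Psi r p).
  rewrite inE; apply/adm_split; rewrite !Psi_child Psi_root; split => //.
by rewrite /Phi !Psi_child; case: p {Hr H1 H2}.
Qed.

Lemma inj n r : {in Adm n.+1 r &, injective (@Phi n)}.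
Proof.
move=> u v; rewrite !inE => /adm_root Hu /adm_root Hv [E1 E2].
apply/ffunP => i; rewrite -!labE.
case: (posnP i) => [->|Hi]; first by rewrite Hu Hv.
have [b [j <-]] := (@sub_cover i Hi).
rewrite -!lab_child; case: b; [by rewrite E2 | by rewrite E1].
Qed.

Lemma cardAdm n r : #|Adm n.+1 r| = #|Target n r|.
Proof. by rewrite -img card_in_imset //; apply: inj. Qed.

Lemma admAny n v : admissible n (lab v 0) v = (v \in Adm n false :|: Adm n true).
Proof.
rewrite !inE; apply/idP/idP.
  by case: (lab v 0) => ->; rewrite ?orbT.
by move=> /orP [] H; rewrite (adm_root _ H).
Qed.

Lemma cardU n : #|Adm n false :|: Adm n true| = #|Adm n false| + #|Adm n true|.
Proof.
rewrite cardsU; suff -> : Adm n false :&: Adm n true = set0 by rewrite cards0 subn0.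
apply/setP => v; rewrite !inE; apply/negbTE/negP => /andP [/adm_root H1 /adm_root H2].
by rewrite H1 in H2.
Qed.

Lemma Fz n x v : lab v 0 = x -> admissible n (~~ x) v = false.
Proof. by move=> E; apply/negP => /adm_root; rewrite E; case: x {E}. Qed.
Lemma Fzt n v : lab v 0 = true -> admissible n false v = false.
Proof. exact: (Fz n true). Qed.
Lemma Fzf n v : lab v 0 = false -> admissible n true v = false.
Proof. exact: (Fz n false). Qed.

Lemma inB1 x y : inB 1 (sym x) (sym y) -> y = true.
Proof. by case: x; case: y. Qed.

Lemma Tfalse n : Target n false = setX (Adm n false :|: Adm n true) (Adm n true).
Proof.
apply/setP => -[v w]; rewrite !inE /=; apply/idP/idP.
  move=> /and3P [Hr Hv Hw]; have Ew := inB1 _ _ Hr.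
  rewrite Ew in Hw; rewrite Hw andbT.
  by move: Hv; case: (lab v 0) => ->; rewrite ?orbT.
move=> /andP [Hv Hw]; rewrite (adm_root _ Hw) Hw andbT.
by case/orP: Hv => Hv; rewrite (adm_root _ Hv) Hv.
Qed.

Lemma Ttrue n : Target n true = setX (Adm n false) (Adm n false).
Proof.
apply/setP => -[v w]; rewrite !inE /=; apply/idP/idP.
  by case: (lab w 0); case: (lab v 0).
by move=> /andP [Hv Hw]; rewrite (adm_root _ Hv) (adm_root _ Hw) Hv Hw.
Qed.

Lemma acountE n : acount n = #|Adm n false|.
Proof. by rewrite /acount; apply: eq_card => u; rewrite !inE. Qed.
Lemma bcountE n : bcount n = #|Adm n true|.
Proof. by rewrite /bcount; apply: eq_card => u; rewrite !inE. Qed.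

Lemma recA n : acount n.+1 = (acount n + bcount n) * bcount n.
Proof. by rewrite !acountE bcountE cardAdm Tfalse cardsX cardU. Qed.
Lemma recB n : bcount n.+1 = acount n * acount n.
Proof. by rewrite !acountE bcountE cardAdm Ttrue cardsX. Qed.

Lemma a0 : acount 0 = 1. Proof. exact: count0. Qed.
Lemma b0 : bcount 0 = 1. Proof. exact: count0. Qed.

Lemma cpos n : 0 < acount n /\ 0 < bcount n.
Proof.
elim: n => [|n [Ha Hb]]; first by rewrite a0 b0.
rewrite recA recB; split; nia.
Qed.

Lemma inv2 k : 2 * bcount (2 * k + 1) <= acount (2 * k + 1) /\ acount (2 * k + 2) < bcount (2 * k + 2).
Proof.
have step : forall m, 2 * bcount m <= acount m -> acount m.+1 < bcount m.+1.
  move=> m H; rewrite recA recB; have [Ha Hb] := cpos m; nia.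
elim: k => [|k [H1 H2]].
  have E : 2 * 0 + 1 = 1 by []. rewrite E; split; last by apply: step; rewrite recA recB a0 b0.
  by rewrite recA recB a0 b0.
have E1 : 2 * k.+1 + 1 = (2 * k + 2).+1 by lia.
have E2 : 2 * k.+1 + 2 = (2 * k.+1 + 1).+1 by lia.
have H3 : 2 * bcount (2 * k.+1 + 1) <= acount (2 * k.+1 + 1).
  rewrite E1 recA recB; have [Ha Hb] := cpos (2 * k + 2); nia.
split => //; rewrite E2; exact: step.
Qed.

Lemma osc : oscillating acount bcount.
Proof.
split => N.
  exists (2 * N + 1); split; first lia.
  have [H _] := inv2 N; lia.
exists (2 * N + 2); split; first lia.
by have [_ H] := inv2 N.
Qed.

Local Open Scope R_scope.

Lemma apos m : 0 < INR (acount m).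
Proof. apply: lt_0_INR; have [H _] := cpos m; exact/ltP. Qed.
Lemma bpos m : 0 < INR (bcount m).
Proof. apply: lt_0_INR; have [_ H] := cpos m; exact/ltP. Qed.

Lemma R1 m : INR (acount m.+2) = INR (acount m) ^ 4 * ra m.
Proof.
rewrite !recA !recB -!multE -!plusE !mult_INR !plus_INR !mult_INR !plus_INR /ra.
have H := apos m; field; lra.
Qed.

Lemma ra_ge1 m : 1 <= ra m.
Proof.
rewrite /ra; have := apos m; have := bpos m => Hb Ha.
have : 0 <= INR (bcount m) / INR (acount m) by apply: Rdiv_le_0_compat; lra.
nra.
Qed.

Lemma ra_le3 k : ra (2 * k + 1)%N <= 3.
Proof.
rewrite /ra; have := apos (2 * k + 1)%N; have := bpos (2 * k + 1)%N => Hb Ha.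
have [H _] := inv2 k.
have H' : INR (bcount (2 * k + 1)) <= INR (acount (2 * k + 1)).
  apply: le_INR; apply/leP; lia.
set q := INR (bcount (2 * k + 1)) / INR (acount (2 * k + 1)).
have Eq : INR (bcount (2 * k + 1)) = q * INR (acount (2 * k + 1)) by rewrite /q; field; lra.
have Q0 : 0 <= q by nra.
have Q1 : q <= 1 by nra.
nra.
Qed.

Lemma pow4 n : 2 ^ (2 * n)%N = 4 ^ n.
Proof. rewrite -multE pow_mult; f_equal; ring. Qed.

Lemma Spart_S k : Spart k.+1 = Spart k + / 2 ^ (2 * k.+1)%N * ln (ra (2 * k.+1 - 1)%N).
Proof. rewrite /Spart; change (Ssum k.+1) with (Ssum k + / 2 ^ (2 * k.+1)%N * ln (ra (2 * k.+1 - 1)%N)); ring. Qed.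

Lemma Spart_eq k : Spart k = ln (INR (acount (2 * k + 1)%N)) / 4 ^ k.
Proof.
elim: k => [|k IH]; first by have -> : (2 * 0 + 1 = 1)%N by []; rewrite /Spart /=; field.
rewrite Spart_S IH pow4.
have E1 : (2 * k.+1 - 1 = 2 * k + 1)%N by lia.
have E2 : (2 * k.+1 + 1 = (2 * k + 1).+2)%N by lia.
rewrite E1 E2 R1 ln_mult; last 2 first.
- apply: pow_lt; exact: apos.
- have := ra_ge1 (2 * k + 1)%N; lra.
rewrite ln_pow; last exact: apos.
have P : 0 < 4 ^ k by apply: pow_lt; lra.
replace (INR 4) with 4 by (simpl; ring). simpl. field. lra.
Qed.

Lemma ln3_le3 : ln 3 <= 3.
Proof.
have H := exp_ineq1 3; have : ln 3 < ln (exp 3) by apply: ln_increasing; lra.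
rewrite ln_exp; lra.
Qed.

Lemma lnra_bounds k : 0 <= ln (ra (2 * k + 1)%N) <= ln 3.
Proof.
have H1 := ra_ge1 (2 * k + 1)%N; have H3 := ra_le3 k.
split; first by rewrite -ln_1; apply: ln_le; lra.
apply: ln_le; lra.
Qed.

Lemma Ssum_bound k : Ssum k + / 4 ^ k <= 1.
Proof.
elim: k => [|k IH]; first by simpl; lra.
change (Ssum k.+1) with (Ssum k + / 2 ^ (2 * k.+1)%N * ln (ra (2 * k.+1 - 1)%N)).
rewrite pow4.
have E1 : (2 * k.+1 - 1 = 2 * k + 1)%N by lia.
rewrite E1; have [H0 H3] := lnra_bounds k; have := ln3_le3 => H4.
have P : 0 < 4 ^ k by apply: pow_lt; lra.
have Q : / 4 ^ k.+1 = / 4 * / 4 ^ k by simpl; field; lra.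
rewrite Q; have P' : 0 < / 4 ^ k by apply: Rinv_0_lt_compat.
nra.
Qed.

Lemma Spart_incr k : Spart k <= Spart k.+1.
Proof.
rewrite Spart_S pow4.
have E1 : (2 * k.+1 - 1 = 2 * k + 1)%N by lia.
rewrite E1; have [H0 _] := lnra_bounds k.
have P : 0 < / 4 ^ k.+1 by apply: Rinv_0_lt_compat; apply: pow_lt; lra.
nra.
Qed.

Lemma Spart_cv : exists L, is_lim_seq Spart (Rbar.Finite L).
Proof.
have [L HL] : ex_finite_lim_seq Spart.
  apply: (ex_finite_lim_seq_incr _ (ln (INR (acount 1)) + 1)); first exact: Spart_incr.
  move=> n; rewrite /Spart; have := Ssum_bound n.
  have : 0 < / 4 ^ n by apply: Rinv_0_lt_compat; apply: pow_lt; lra.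
  lra.
by exists L.
Qed.

Lemma INR_expn2 n : INR (2 ^ n)%N = 2 ^ n.
Proof.
elim: n => [|n IH]; first by [].
rewrite expnS -multE mult_INR IH /=; ring.
Qed.

Lemma INR_nwords n : INR (nwords n) = 2 * 2 ^ n - 1.
Proof.
rewrite /nwords -minusE minus_INR; last by apply/leP; rewrite expn_gt0.
rewrite INR_expn2 /=; ring.
Qed.

Lemma G (x th : nat -> R) (L M c : R) :
  is_lim_seq x (Rbar.Finite L) -> (forall k, 0 <= th k <= M) -> 1 <= c ->
  is_lim_seq (fun k => (c * 4 ^ k * x k + th k) / (4 * c * 4 ^ k - 1)) (Rbar.Finite (L / 4)).
Proof.
move=> Hx Hth Hc.
set e := fun k : nat => / c * (/ 4) ^ k.
have He : is_lim_seq e (Rbar.Finite 0).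
  have := is_lim_seq_mult' _ _ _ _ (is_lim_seq_const (/ c)) (is_lim_seq_geom (/ 4) ltac:(rewrite Rabs_pos_eq; lra)).
  by rewrite Rmult_0_r.
have Hte : is_lim_seq (fun k => th k * e k) (Rbar.Finite 0).
  apply: (is_lim_seq_le_le (fun _ => 0) _ (fun k => M * e k)).
  - move=> k; have [H0 H1] := Hth k.
    have : 0 < e k by rewrite /e; apply: Rmult_lt_0_compat; [apply: Rinv_0_lt_compat; lra| apply: pow_lt; lra].
    split; nra.
  - exact: is_lim_seq_const.
  - have := is_lim_seq_mult' _ _ _ _ (is_lim_seq_const M) He.
    by rewrite Rmult_0_r.
have H := is_lim_seq_div' _ _ _ _ (is_lim_seq_plus' _ _ _ _ Hx Hte)
   (is_lim_seq_minus' _ _ _ _ (is_lim_seq_const 4) He) ltac:(lra).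
rewrite Rplus_0_r Rminus_0_r in H.
apply: (is_lim_seq_ext _ _ _ _ H) => k.
have P : 0 < 4 ^ k by apply: pow_lt; lra.
have P1 : 1 <= 4 ^ k by apply: pow_R1_Rle; lra.
rewrite /e pow_inv. field; repeat split; nra.
Qed.

Lemma INR_add m n : INR (m + n)%N = INR m + INR n.
Proof. exact: plus_INR. Qed.

Definition f n := ln (INR (acount n + bcount n)) / INR (nwords n).

Lemma combine (u : nat -> R) l :
  is_lim_seq (fun k => u (2 * k + 1)%N) (Rbar.Finite l) ->
  is_lim_seq (fun k => u (2 * k + 2)%N) (Rbar.Finite l) ->
  is_lim_seq u (Rbar.Finite l).
Proof.
move=> /is_lim_seq_spec H1 /is_lim_seq_spec H2; apply/is_lim_seq_spec => eps.
have [N1 HN1] := H1 eps; have [N2 HN2] := H2 eps.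
exists (2 * (N1 + N2) + 1)%N => n /leP Hn.
have [k [Ek Hk]] : exists k, (N1 + N2 <= k)%N /\ (n = 2 * k + 1 \/ n = 2 * k + 2)%N.
  exists ((n - 1) %/ 2)%N; split; first lia.
  lia.
case: Hk => ->.
  by apply: HN1; apply/leP; lia.
by apply: HN2; apply/leP; lia.
Qed.

Lemma pow2odd k : 2 ^ (2 * k + 1)%N = 2 * 4 ^ k.
Proof. rewrite -plusE pow_add pow4 /=; ring. Qed.
Lemma pow2even k : 2 ^ (2 * k + 2)%N = 4 * 4 ^ k.
Proof. rewrite -plusE pow_add pow4 /=; ring. Qed.

Lemma f_odd k : f (2 * k + 1)%N =
  (1 * 4 ^ k * Spart k + (ln (INR (acount (2 * k + 1) + bcount (2 * k + 1))) - ln (INR (acount (2 * k + 1)))))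
  / (4 * 1 * 4 ^ k - 1).
Proof.
rewrite /f INR_nwords pow2odd Spart_eq.
have P : 0 < 4 ^ k by apply: pow_lt; lra.
have P1 : 1 <= 4 ^ k by apply: pow_R1_Rle; lra.
field; nra.
Qed.

Lemma f_even k : f (2 * k + 2)%N =
  (2 * 4 ^ k * Spart k + ln (ra (2 * k + 1)%N)) / (4 * 2 * 4 ^ k - 1).
Proof.
have E : (2 * k + 2 = (2 * k + 1).+1)%N by lia.
have Ha := apos (2 * k + 1)%N.
have Hn : INR (acount (2 * k + 2) + bcount (2 * k + 2)) = INR (acount (2 * k + 1)) ^ 2 * ra (2 * k + 1)%N.
  rewrite E recA recB /ra; move: Ha; set a := acount (2 * k + 1)%N; set b := bcount (2 * k + 1)%N => Ha.
  rewrite -!multE -!plusE !plus_INR !mult_INR !plus_INR; field; lra.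
rewrite /f Hn ln_mult; last 2 first.
- by apply: pow_lt.
- have := ra_ge1 (2 * k + 1)%N; lra.
rewrite ln_pow // INR_nwords pow2even Spart_eq.
have P : 0 < 4 ^ k by apply: pow_lt; lra.
have P1 : 1 <= 4 ^ k by apply: pow_R1_Rle; lra.
simpl; field; nra.
Qed.

Lemma f_lim L : is_lim_seq Spart (Rbar.Finite L) -> is_lim_seq f (Rbar.Finite (L / 4)).
Proof.
move=> HL; apply: combine.
  apply: is_lim_seq_ext; first by move=> k; rewrite f_odd.
  apply: (G _ _ _ (ln 3)) => // [k|]; last lra.
  have Ha := apos (2 * k + 1)%N; have Hb := bpos (2 * k + 1)%N.
  have [H _] := inv2 k.
  have H' : INR (bcount (2 * k + 1)) <= INR (acount (2 * k + 1)).
    apply: le_INR; apply/leP; lia.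
  rewrite INR_add; split.
    suff : ln (INR (acount (2 * k + 1))) <= ln (INR (acount (2 * k + 1)) + INR (bcount (2 * k + 1))) by lra.
    apply: ln_le; lra.
  suff : ln (INR (acount (2 * k + 1)) + INR (bcount (2 * k + 1))) <= ln (3 * INR (acount (2 * k + 1))).
    rewrite ln_mult; lra.
  apply: ln_le; lra.
apply: is_lim_seq_ext; first by move=> k; rewrite f_even.
apply: (G _ _ _ (ln 3)) => // [k|]; last lra.
exact: lnra_bounds.
Qed.

Theorem proposition5 :
  oscillating acount bcount /\
  exists L : R, is_lim_seq Spart (Rbar.Finite L) /\ entropy = Rbar.Finite (Rdiv L (INR 4)).
Proof.
split; first exact: osc.
have [L HL] := Spart_cv; exists L; split => //.
have -> : INR 4 = 4%R by simpl; ring.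
apply: is_LimSup_seq_unique; apply: is_lim_LimSup_seq.
exact: f_lim.
Qed.
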